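(* Suppose there is a $(v,[k_1,k_2,k_3],\lambda)$ Hadamard partitioned difference family. Then $k_1$ and $k_2$ are (in some order) the two numbers $$\frac{2\lambda-k_3\pm\sqrt{2\lambda(2k_3+1)-3k_3^2}}{2}.$$
   Context: $G$ is a finite group of order $v$ written additively, with difference $x-y:=x+(-y)$. For $B\subseteq G$, $\Delta B$ is the multiset $\{x-y: x,y\in B, x\neq y\}$; for $\mathcal{F}=\{B_1,\dots,B_t\}$, $\Delta\mathcal{F}$ is the multiset union of the $\Delta B_i$. A $(v,[k_1,\dots,k_t],\lambda)$ partitioned difference family (PDF) is a collection $\{B_1,\dots,B_t\}$ of subsets partitioning some group $G$ of order $v$ with $|B_i|=k_i$ such that $\Delta\mathcal{F}$ contains every non-zero element of $G$ exactly $\lambda$ times. It is Hadamard (HPDF) if $v=2\lambda$. *)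

(* Defs.v *)
From mathcomp Require Import all_boot all_order all_algebra all_fingroup.
Set Implicit Arguments. Unset Strict Implicit. Unset Printing Implicit Defensive.

(* The group G (possibly non-abelian) is a subgroup of a finGroupType gT;
   the paper's additive notation x - y := x + (-y) becomes x * y^-1. *)

(* multiplicity of g in the multiset Delta B = { x - y : x, y in B, x <> y } *)
Definition diff_count (gT : finGroupType) (B : {set gT}) (g : gT) : nat :=
  #|[set p in setX B B | (p.1 != p.2) && ((p.1 * p.2^-1)%g == g)]|.

Definition is_PDF (gT : finGroupType) (G : {group gT}) (t : nat)
    (B : 'I_t -> {set gT}) (lam : nat) : Prop :=
  [/\ (forall i j, i != j -> [disjoint B i & B j]),
      \bigcup_(i < t) B i = G
    & forall g, g \in G -> g != 1%g -> \sum_(i < t) diff_count (B i) g = lam].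

Definition is_HPDF (gT : finGroupType) (G : {group gT}) (t : nat)
    (B : 'I_t -> {set gT}) (lam : nat) : Prop :=
  is_PDF G B lam /\ #|G| = (2 * lam)%N.

(* Main.v *)
Require Import Defs.
From mathcomp Require Import all_boot all_order all_algebra all_fingroup.
From mathcomp Require Import ring lra.
Set Implicit Arguments. Unset Strict Implicit. Unset Printing Implicit Defensive.

Lemma npairs (gT : finGroupType) (B : {set gT}) :
  #|[set p in setX B B | p.1 != p.2]| = (#|B| * (#|B| - 1))%N.
Proof.
rewrite -sum1_card.
rewrite (eq_bigl (fun p : gT * gT => (p.1 \in B) && ((p.2 \in B) && (p.2 != p.1)))); last first.
  by move=> [x y]; rewrite !inE /= andbA eq_sym.
rewrite -(pair_big_dep (fun x => x \in B) (fun x y => (y \in B) && (y != x)) (fun _ _ => 1%N)) /=.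
rewrite -sum_nat_const.
apply: eq_bigr => x xB.
rewrite (cardsD1 x B) xB add1n subSS subn0 -sum1_card.
by apply: eq_bigl => y; rewrite !inE andbC.
Qed.

Lemma dc_sum (gT : finGroupType) (G : {group gT}) (B : {set gT}) :
  B \subset G -> (\sum_(g in G | g != 1%g) diff_count B g = #|B| * (#|B| - 1))%N.
Proof.
move=> sBG.
rewrite -npairs -sum1_card. idtac.
rewrite (partition_big (fun p : gT * gT => (p.1 * p.2^-1)%g) (fun g => (g \in G) && (g != 1%g))) /=; last first.
  move=> [x y]; rewrite !inE /= => /andP[/andP[xB yB] nxy].
  rewrite groupM ?groupV ?(subsetP sBG) //=.
  by rewrite -eq_mulgV1.
apply: eq_bigr => g _.
rewrite /diff_count -sum1_card.
by apply: eq_bigl => p; rewrite !inE andbA.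
Qed.

Lemma big3 (T : Type) (idx : T) (op : Monoid.law idx) (F : 'I_3 -> T) :
  \big[op/idx]_(i < 3) F i = op (F ord0) (op (F (inord 1)) (F (inord 2))).
Proof.
rewrite !big_ord_recl big_ord0 Monoid.mulm1.
have -> : lift ord0 ord0 = inord 1 :> 'I_3 by apply: val_inj; rewrite /= inordK.
have -> : lift ord0 (lift ord0 ord0) = inord 2 :> 'I_3 by apply: val_inj; rewrite /= inordK.
by [].
Qed.

Import Order.TTheory GRing.Theory Num.Theory.
Local Open Scope ring_scope.

Lemma natr_pred (R : rcfType) (k : nat) : ((k * (k - 1))%N%:R : R) = k%:R * (k%:R - 1).
Proof. case: k => [|k]; first by rewrite mul0n mul0r. by rewrite subSS subn0 natrM -addn1 natrD addrK. Qed.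

Theorem proposition3p2 (R : rcfType) (gT : finGroupType) (G : {group gT})
    (B : 'I_3 -> {set gT}) (v k1 k2 k3 lam : nat) :
  is_HPDF G B lam -> #|G| = v ->
  #|B ord0| = k1 -> #|B (inord 1)| = k2 -> #|B (inord 2)| = k3 ->
  let D : R := 2 * lam%:R * (2 * k3%:R + 1) - 3 * k3%:R ^+ 2 in
  let kp : R := (2 * lam%:R - k3%:R + Num.sqrt D) / 2 in
  let km : R := (2 * lam%:R - k3%:R - Num.sqrt D) / 2 in
  (k1%:R = kp /\ k2%:R = km) \/ (k1%:R = km /\ k2%:R = kp).
Proof.
move=> [[disj cup dcs] hG] _ h1 h2 h3 D kp km.
have sub i : B i \subset G by rewrite -cup; apply: (bigcup_sup i).
have d01 : [disjoint B ord0 & B (inord 1)] by apply: disj; apply/eqP => /(congr1 val); rewrite /= inordK.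
have d02 : [disjoint B ord0 & B (inord 2)] by apply: disj; apply/eqP => /(congr1 val); rewrite /= inordK.
have d12 : [disjoint B (inord 1) & B (inord 2)] by apply: disj; apply/eqP => /(congr1 val); rewrite /= !inordK.
have cardG : #|G| = (k1 + k2 + k3)%N.
  rewrite -cup big3 cardsU (cardsU (B (inord 1))).
  move: d01 d02 d12; rewrite -!setI_eq0 => /eqP d01 /eqP d02 /eqP d12.
  rewrite d12 cards0 subn0 setIUr d01 d02 set0U cards0 subn0 h1 h2 h3.
  by rewrite addnA.
have sq : (\sum_(i < 3) #|B i| * (#|B i| - 1) = lam * (#|G| - 1))%N.
  rewrite (eq_bigr (fun i => \sum_(g in G | g != 1%g) diff_count (B i) g)); last first.
    by move=> i _; rewrite dc_sum.
  rewrite exchange_big /=.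
  rewrite (eq_bigr (fun _ => lam)); last by move=> g /andP[gG g1]; rewrite dcs.
  rewrite (eq_bigl (fun g => g \in G :\ 1%g)); last by move=> g; rewrite !inE andbC.
  by rewrite sum_nat_const (cardsD1 1%g G) group1 add1n subSS subn0 mulnC.
move: sq; rewrite big3 h1 h2 h3 => /(congr1 (fun n => n%:R : R)).
rewrite !natrD !natr_pred => e2. rewrite (natrM R lam) natrB ?cardG_gt0 // cardG !natrD in e2.
move: hG; rewrite cardG => /(congr1 (fun n => n%:R : R)); rewrite !natrD => e1.
have hD : D = (k1%:R - k2%:R) ^+ 2 by rewrite /D; nra.
rewrite /kp /km hD sqrtr_sqr.
have [hab|hab] := lerP 0 (k1%:R - k2%:R : R).
  by rewrite ger0_norm //; left; split; lra.
by rewrite ltr0_norm //; right; split; lra.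
Qed.
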